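(* Let $(V,h)$ be a real quadratic space of odd dimension $d$ and let $\gamma^+,\gamma^-:\mathrm{Cl}(V,h)\to\mathrm{End}_\mathbb{C}(S)$ be the Pauli representations. Then $\gamma^+$ and $\gamma^-$ are weakly-faithful, and they are isomorphic in the category $\mathrm{\mathbb{C}lRep}_w$.
   Context: $(V,h)$: finite-dimensional real vector space with non-degenerate symmetric bilinear form of signature $(p,q)$, $d=p+q$; $\mathrm{Cl}(V,h)$ its real Clifford algebra and $\mathbb{C}\mathrm{l}(V,h)=\mathrm{Cl}(V,h)\otimes_\mathbb{R}\mathbb{C}$. For $d$ odd, fix an orientation of $V$ and let $\nu\in\mathrm{Cl}(V,h)$ be the corresponding Clifford volume element; it is central with $\nu^2=\sigma_{p,q}=(-1)^{(p-q-1)/2}$. Let $\nu_\mathbb{C}=\lambda\nu$ with $\lambda^2=\sigma_{p,q}$, so $\nu_\mathbb{C}$ is central in $\mathbb{C}\mathrm{l}(V,h)$ and $\nu_\mathbb{C}^2=1$. The Pauli representations are the two irreducible complex-algebra representations $\gamma^\pm_\mathbb{C}:\mathbb{C}\mathrm{l}(V,h)\to\mathrm{End}_\mathbb{C}(S)$ (with $\dim_\mathbb{C}S=2^{(d-1)/2}$) characterized by $\gamma^\pm_\mathbb{C}(\nu_\mathbb{C})=\pm\mathrm{id}_S$, restricted to $\mathrm{Cl}(V,h)$: $\gamma^\pm=\gamma^\pm_\mathbb{C}|_{\mathrm{Cl}(V,h)}$. A complex Clifford representation (unital real-algebra morphism $\mathrm{Cl}(V,h)\to\mathrm{End}_\mathbb{C}(S)$)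 is weakly-faithful if its restriction to $V$ is injective. $\mathrm{\mathbb{C}lRep}_w$ is the category whose objects are weakly-faithful complex Clifford representations (of arbitrary quadratic spaces) and whose morphisms $\gamma\to\gamma'$ are pairs $(\varphi_0,\varphi)$ of an isometry $\varphi_0:(V,h)\to(V',h')$ and a $\mathbb{C}$-linear map $\varphi:S\to S'$ with $\gamma'(\mathrm{Cl}(\varphi_0)(x))\circ\varphi=\varphi\circ\gamma(x)$ for all $x\in\mathrm{Cl}(V,h)$, where $\mathrm{Cl}(\varphi_0)$ is the algebra morphism extending $\varphi_0$. *)

(* Defs.v *)
From HB Require Import structures.
From mathcomp Require Import all_boot all_order all_algebra.
From mathcomp Require Import complex.
From mathcomp Require Import reals.

Set Implicit Arguments.
Unset Strict Implicit.
Unset Printing Implicit Defensive.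

Import Order.TTheory GRing.Theory Num.Theory.
Local Open Scope ring_scope.

Definition quad_form (R : realType) (V : vectType R) (h : V -> V -> R) : Prop :=
  [/\ forall (a : R) (u v w : V), h (a *: u + v) w = a * h u w + h v w,
      forall u v : V, h u v = h v u
    & forall u : V, (forall v : V, h u v = 0) -> u = 0].

Definition isometry (R : realType) (V V' : vectType R)
  (h : V -> V -> R) (h' : V' -> V' -> R) (f : 'Hom(V, V')) : Prop :=
  forall u v : V, h' (f u) (f v) = h u v.

Definition orthonormal_basis (R : realType) (V : vectType R) (h : V -> V -> R)
  (e : (\dim {: V}%VS).-tuple V) : Prop :=
  [/\ basis_of fullv e,
      forall i j : 'I_(\dim {: V}%VS), i != j -> h (tnth e i) (tnth e j) = 0
    & forall i : 'I_(\dim {: V}%VS),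
        h (tnth e i) (tnth e i) = 1 \/ h (tnth e i) (tnth e i) = -1].

Definition sig_p (R : realType) (V : vectType R) (h : V -> V -> R)
  (e : (\dim {: V}%VS).-tuple V) : nat :=
  #|[set i : 'I_(\dim {: V}%VS) | h (tnth e i) (tnth e i) == 1]|.

Definition sig_q (R : realType) (V : vectType R) (h : V -> V -> R)
  (e : (\dim {: V}%VS).-tuple V) : nat :=
  (\dim {: V}%VS - sig_p h e)%N.

Definition sigma_pq (R : realType) (p q : nat) : R :=
  (-1) ^ ((p%:Z - q%:Z - 1) %/ 2)%Z.

Definition ralg_morph (R : realType) (A B : algType R) (F : A -> B) : Prop :=
  [/\ forall x y : A, F (x + y) = F x + F y,
      forall (a : R) (x : A), F (a *: x) = a *: F x,
      forall x y : A, F (x * y) = F x * F y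
    & F 1 = 1].

Definition is_clifford_algebra (R : realType) (V : vectType R)
  (h : V -> V -> R) (A : algType R) (iota : V -> A) : Prop :=
  [/\ forall (a : R) (u v : V), iota (a *: u + v) = a *: iota u + iota v,
      forall v : V, iota v * iota v = (h v v)%:A
    & forall (B : algType R) (f : V -> B),
        (forall (a : R) (u v : V), f (a *: u + v) = a *: f u + f v) ->
        (forall v : V, f v * f v = (h v v)%:A) ->
        exists! F : A -> B, ralg_morph F /\ (forall v : V, F (iota v) = f v)].

Definition clifford_volume (R : realType) (V : vectType R) (A : algType R)
  (iota : V -> A) (e : (\dim {: V}%VS).-tuple V) : A :=
  \prod_(i < \dim {: V}%VS) iota (tnth e i).

Definition cl_rep (R : realType) (A : algType R) (S : vectType R[i])
  (gamma : A -> 'End(S)) : Prop :=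
  [/\ forall x y : A, gamma (x + y) = gamma x + gamma y,
      forall (a : R) (x : A), gamma (a *: x) = (a%:C)%C *: gamma x,
      forall x y : A, gamma (x * y) = (gamma x \o gamma y)%VF
    & gamma 1 = \1%VF].

Definition weakly_faithful (R : realType) (V : vectType R) (A : algType R)
  (iota : V -> A) (S : vectType R[i]) (gamma : A -> 'End(S)) : Prop :=
  forall u v : V, gamma (iota u) = gamma (iota v) -> u = v.

(* irreducibility of the complexified representation gamma_C of Cl_C(V,h):
   S is nonzero and the only C-subspaces invariant under gamma(Cl(V,h))
   (equivalently under gamma_C(Cl_C(V,h))) are 0 and S. *)
Definition irreducible_rep (R : realType) (A : algType R) (S : vectType R[i])
  (gamma : A -> 'End(S)) : Prop :=
  (0 < \dim {: S}%VS)%N /\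
  forall U : {vspace S},
    (forall x : A, (gamma x @: U <= U)%VS) -> U = 0%VS \/ U = fullv.

(* Pauli representation gamma^s (s = + or -, encoded by eps = 1 or -1):
   restriction to Cl(V,h) of an irreducible complex representation gamma_C
   of Cl_C(V,h) with gamma_C(nu_C) = eps id_S, where nu_C = lambda nu.
   Since gamma_C is the C-linear extension of gamma, gamma_C(nu_C) =
   lambda gamma(nu). *)
Definition pauli_rep (R : realType) (V : vectType R) (A : algType R)
  (iota : V -> A) (e : (\dim {: V}%VS).-tuple V) (lambda : R[i])
  (eps : R[i]) (S : vectType R[i]) (gamma : A -> 'End(S)) : Prop :=
  [/\ cl_rep gamma, irreducible_rep gamma
    & lambda *: gamma (clifford_volume iota e) = eps *: \1%VF].

(* morphism (phi0, phi) : gamma -> gamma' in ClRep_w, where Cl(phi0) is the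
   (unique, by the universal property) algebra morphism extending phi0 *)
Definition clrep_morph (R : realType) (V V' : vectType R)
  (h : V -> V -> R) (h' : V' -> V' -> R)
  (A A' : algType R) (iota : V -> A) (iota' : V' -> A')
  (S S' : vectType R[i]) (gamma : A -> 'End(S)) (gamma' : A' -> 'End(S'))
  (phi0 : 'Hom(V, V')) (phi : 'Hom(S, S')) : Prop :=
  isometry h h' phi0 /\
  forall F : A -> A', ralg_morph F -> (forall v : V, F (iota v) = iota' (phi0 v)) ->
    forall x : A, (gamma' (F x) \o phi = phi \o gamma x)%VF.

Definition clrep_iso (R : realType) (V : vectType R) (h : V -> V -> R)
  (A : algType R) (iota : V -> A)
  (S S' : vectType R[i]) (gamma : A -> 'End(S)) (gamma' : A -> 'End(S')) : Prop :=
  exists (phi0 psi0 : 'End(V)) (phi : 'Hom(S, S')) (psi : 'Hom(S', S)),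
    [/\ clrep_morph h h iota iota gamma gamma' phi0 phi,
        clrep_morph h h iota iota gamma' gamma psi0 psi,
        (psi0 \o phi0 = \1)%VF /\ (phi0 \o psi0 = \1)%VF
      & (psi \o phi = \1)%VF /\ (phi \o psi = \1)%VF].

(* Main.v *)
Require Import Defs.
From HB Require Import structures.
From mathcomp Require Import all_boot all_order all_algebra.
From mathcomp Require Import complex.
From mathcomp Require Import reals boolp ring.
Set Implicit Arguments. Unset Strict Implicit. Unset Printing Implicit Defensive.
Import GRing.Theory Num.Theory.
Local Open Scope ring_scope.

Section Gen.
Variables (R : realType) (V : vectType R) (h : V -> V -> R) (A : algType R) (iota : V -> A).

Definition closedP (Q : A -> Prop) :=
  [/\ Q 1, (forall x y, Q x -> Q y -> Q (x + y)), (forall (a : R) x, Q x -> Q (a *: x)),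
      (forall x y, Q x -> Q y -> Q (x * y)) & (forall v, Q (iota v))].

Definition genP (x : A) : bool := `[< forall Q, closedP Q -> Q x >].

Lemma genP_closed : subalg_closed genP.
Proof.
split.
- by apply/asboolP => Q [].
- move=> a u v /asboolP Hu /asboolP Hv; apply/asboolP => Q HQ.
  case: (HQ) => _ HD HZ _ _; apply: HD; [apply: HZ; exact: Hu|exact: Hv].
- move=> u v /asboolP Hu /asboolP Hv; apply/asboolP => Q HQ.
  case: (HQ) => _ _ _ HM _; apply: HM; [exact: Hu|exact: Hv].
Qed.

HB.instance Definition _ := GRing.isSubalgClosed.Build R A genP genP_closed.

Definition subA := {x : A | genP x}.
HB.instance Definition _ := [isSub of subA for (@sval A genP)].
HB.instance Definition _ := [Choice of subA by <:].
HB.instance Definition _ := [SubChoice_isSubAlgebra of subA by <:].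

End Gen.

Section Gen2.
Variables (R : realType) (V : vectType R) (h : V -> V -> R) (A : algType R) (iota : V -> A).

Lemma genP_iota v : genP iota (iota v).
Proof. by apply/asboolP => Q [] _ _ _ _; apply. Qed.

Lemma clifford_gen : is_clifford_algebra h iota ->
  forall Q : A -> Prop, closedP iota Q -> forall x, Q x.
Proof.
case=> Hlin Hcl Huniv Q HQ x.
pose f (v : V) : subA iota := Sub (iota v) (genP_iota v).
have flin : forall (a : R) (u v : V), f (a *: u + v) = a *: f u + f v.
  by move=> a u v; apply: val_inj; rewrite /= Hlin.

have fcl : forall v, f v * f v = (h v v)%:A.
  by move=> v; apply: val_inj; rewrite /= Hcl.
have [F [[[FD FZ FM F1] Fi] _]] := Huniv _ f flin fcl.
have [G0 [_ G0u]] := Huniv _ iota Hlin Hcl.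
have Gid : (fun y => val (F y)) = id.
  have e1 := G0u (fun y => val (F y)).
  have e2 := G0u id.
  rewrite -e1; last first.
    split; first split.
    - by move=> a b; rewrite FD raddfD.
    - by move=> a b; rewrite FZ linearZ.
    - by move=> a b; rewrite FM rmorphM.
    - by rewrite F1 rmorph1.
    - by move=> v; rewrite Fi.
  by rewrite -e2.
have -> : x = val (F x) by rewrite (congr1 (fun g => g x) Gid).
by move: (valP (F x)) => /asboolP; apply.
Qed.
End Gen2.
Fixpoint subseqs (T : Type) (s : seq T) : seq (seq T) :=
  if s is x :: s' then subseqs s' ++ map (cons x) (subseqs s') else [:: [::]].

Lemma mem_subseqs (T : eqType) (s l : seq T) : l \in subseqs s -> subseq l s.
Proof.
elim: s l => [|x s IH] l /=; first by rewrite inE => /eqP ->.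
rewrite mem_cat => /orP[/IH Hl|/mapP[l' /IH Hl' ->]].
  exact: (subseq_trans Hl (subseq_cons s x)).
by rewrite /= eqxx.
Qed.

Lemma count_subseqs_nil (T : eqType) (s : seq T) : count (pred1 [::]) (subseqs s) = 1%N.
Proof.
elim: s => [|x s IH] //=; rewrite count_cat IH count_map.
by rewrite (eq_count (a2 := pred0)) ?count_pred0.
Qed.

Lemma count_subseqs_self (T : eqType) (s : seq T) : count (pred1 s) (subseqs s) = 1%N.
Proof.
elim: s => [|x s IH] //=; rewrite count_cat count_map.
have -> : count (pred1 (x :: s)) (subseqs s) = 0%N.
  rewrite (@eq_in_count _ _ pred0) ?count_pred0 // => l /mem_subseqs /size_subseq Hl /=.
  by apply/negP => /eqP Hls; move: Hl; rewrite Hls /= ltnn.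
rewrite add0n -IH; apply: eq_count => l /=.
by rewrite [_ == _]eqseq_cons eqxx.
Qed.

Section Core.
Variables (K : numFieldType) (k n : nat).
Hypothesis k_gt0 : (0 < k)%N.
Variable h : 'I_n -> K.
Hypothesis hsq : forall i, h i * h i = 1.
Variables (a c : 'I_n -> 'M[K]_k).
Hypothesis asq : forall i, a i *m a i = (h i)%:M.
Hypothesis csq : forall i, c i *m c i = (h i)%:M.
Hypothesis aanti : forall i j, i != j -> a i *m a j = - (a j *m a i).
Hypothesis canti : forall i j, i != j -> c i *m c j = - (c j *m c i).

Definition prodm (l : seq 'M[K]_k) := foldr mulmx 1%:M l.

Lemma prodm_rcons l x : prodm (rcons l x) = prodm l *m x.
Proof. by elim: l => [|y l IH] /=; rewrite ?mul1mx ?mulmx1 // IH mulmxA. Qed.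

Definition Pj j X := X + h j *: (c j *m X *m a j).
Definition Op (s : seq 'I_n) X := foldl (fun X j => Pj j X) X s.

Lemma Op_add s X Y : Op s (X + Y) = Op s X + Op s Y.
Proof.
elim: s X Y => [|j s IH] X Y //=; rewrite -IH; congr Op.
by rewrite /Pj mulmxDr mulmxDl scalerDr addrACA.
Qed.

Lemma Op_scale s x X : Op s (x *: X) = x *: Op s X.
Proof.
elim: s X => [|j s IH] X //=; rewrite -IH; congr Op.
by rewrite /Pj -scalemxAr -scalemxAl scalerDr !scalerA mulrC.
Qed.

Lemma Pj_inter j X i : (i == j) || (X *m a i == c i *m X) ->
  Pj j X *m a i = c i *m Pj j X.
Proof.
rewrite /Pj mulmxDl mulmxDr -scalemxAl -scalemxAr.
case: (eqVneq i j) => [->|nij] /= H.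
  rewrite -[c j *m X *m a j *m a j]mulmxA asq mul_mx_scalar !mulmxA csq mul_scalar_mx -scalemxAl !scalerA hsq !scale1r.
  by rewrite addrC.
move/eqP: H => H.
have nji : j != i by rewrite eq_sym.
rewrite -[c j *m X *m a j *m a i]mulmxA (aanti nji) mulmxN mulmxA.
rewrite -[c j *m X *m a i]mulmxA H mulmxA (canti nji) !mulNmx opprK.
by rewrite !mulmxA.
Qed.



Lemma Op_inter s X (J : pred 'I_n) : (forall i, J i -> X *m a i = c i *m X) ->
  forall i, J i || (i \in s) -> Op s X *m a i = c i *m Op s X.
Proof.
elim: s X J => [|j s IH] X J HJ i /=; first by rewrite orbF; apply: HJ.
move=> Hi; apply: (IH _ [pred i | (i == j) || J i]).
  move=> i' /= Hi'; apply: Pj_inter; case/orP: Hi' => [->//|/HJ ->].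
  by rewrite eqxx orbT.
by move: Hi; rewrite !inE /=; case/orP => [->|/orP[->|->]]; rewrite ?orbT.
Qed.

Definition Phi (L : 'M[K]_k -> 'M[K]_k) := \sum_(p < k) \sum_(q < k) L (delta_mx p q) p q.

Lemma Phi_UW U W : Phi (fun X => U *m X *m W) = \tr U * \tr W.
Proof.
rewrite /Phi /mxtrace big_distrl /=; apply: eq_bigr => p _.
rewrite big_distrr /=; apply: eq_bigr => q _.
rewrite -(@mul_delta_mx _ k 1 k 0 p q) mulmxA -colE -mulmxA -rowE.
by rewrite !mxE big_ord1 !mxE.
Qed.

Lemma Phi_ext L1 L2 : (forall X, L1 X = L2 X) -> Phi L1 = Phi L2.
Proof. by move=> H; rewrite /Phi; apply: eq_bigr => p _; apply: eq_bigr => q _; rewrite H. Qed.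

Lemma Phi_add L1 L2 : Phi (fun X => L1 X + L2 X) = Phi L1 + Phi L2.
Proof.
rewrite /Phi -big_split /=; apply: eq_bigr => p _.
by rewrite -big_split /=; apply: eq_bigr => q _; rewrite mxE.
Qed.

Lemma Phi_scale x L : Phi (fun X => x *: L X) = x * Phi L.
Proof.
rewrite /Phi big_distrr /=; apply: eq_bigr => p _.
by rewrite big_distrr /=; apply: eq_bigr => q _; rewrite mxE.
Qed.

Lemma Phi0 : Phi (fun _ => 0) = 0.
Proof. by rewrite /Phi big1 // => p _; rewrite big1 // => q _; rewrite mxE. Qed.

Definition Psi s U W := Phi (fun X => Op s (U *m X *m W)).

Lemma Psi_expand s U W : Psi s U W =
  \sum_(l <- subseqs s) (\prod_(j <- l) h j) * \tr (prodm (map c (rev l)) *m U)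
      * \tr (W *m prodm (map a l)).
Proof.
elim: s U W => [|j s IH] U W.
  by rewrite /Psi /= big_seq1 big_nil mul1r mul1mx mulmx1 Phi_UW.
have -> : Psi (j :: s) U W = Psi s U W + h j * Psi s (c j *m U) (W *m a j).
  rewrite /Psi -Phi_scale -Phi_add; apply: Phi_ext => X /=.
  by rewrite /Pj Op_add Op_scale !mulmxA.
rewrite !IH /= big_cat big_map /= big_distrr /=; congr (_ + _).
apply: eq_bigr => l _; rewrite big_cons rev_cons map_rcons prodm_rcons /=.
by rewrite !mulmxA !mulrA.
Qed.

Lemma sign_comm j l : a j *m prodm (map a l) =
  (-1) ^+ count (predC1 j) l *: (prodm (map a l) *m a j).
Proof.
elim: l => [|x l IH] /=; first by rewrite expr0 scale1r mulmx1 mul1mx.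
case: (eqVneq x j) => [->|nxj] /=.
  by rewrite [in LHS]IH -scalemxAr !mulmxA.
have njx : j != x by rewrite eq_sym.
rewrite mulmxA (aanti njx) mulNmx -[a x *m a j *m _]mulmxA [in LHS]IH -scalemxAr !mulmxA.
by rewrite exprS mulN1r scaleNr.
Qed.

Lemma tr_anti j P : a j *m P = - (P *m a j) -> \tr P = 0.
Proof.
move=> H.
have e1 : \tr (a j *m (P *m a j)) = h j * \tr P.
  by rewrite mxtrace_mulC -mulmxA asq mul_mx_scalar mxtraceZ.
have e2 : \tr (a j *m (P *m a j)) = - (h j * \tr P).
  by rewrite mulmxA H mulNmx -mulmxA asq mul_mx_scalar raddfN /= mxtraceZ.
have : h j * \tr P *+ 2 = 0 by rewrite mulr2n -{1}e1 e2 addNr.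
move/eqP; rewrite mulrn_eq0 /= => /eqP/(congr1 (fun x => h j * x)).
by rewrite mulrA hsq mul1r mulr0.
Qed.


Variable s : seq 'I_n.
Hypothesis s_uniq : uniq s.
Hypothesis s_all : forall i, i \in s.
Hypothesis n_gt0 : (0 < n)%N.
Variable la : K.
Hypothesis vola : la *: prodm (map a s) = 1%:M.
Hypothesis volc : la *: prodm (map c s) = 1%:M.

Lemma vanish l : subseq l s -> l != [::] -> l != s -> \tr (prodm (map a l)) = 0.
Proof.
move=> sub lnil ls.
have lu : uniq l := subseq_uniq sub s_uniq.
case: (boolP (odd (size l))) => Hodd.
  have [j jl] : exists j, j \notin l.
    apply/existsP; apply: contraT; rewrite negb_exists => /forallP /= Hall.
    have H1 : (size s <= size l)%N.
      by apply: uniq_leq_size s_uniq _ => x _; move: (Hall x); rewrite negbK.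
    have := size_subseq_leqif sub; case => H2 H3.
    by move: ls; rewrite -H3 eqn_leq H1 H2.
  apply: (@tr_anti j); rewrite sign_comm.
  have -> : count (predC1 j) l = size l.
    rewrite -[RHS]count_predT; apply: eq_in_count => x xl /=.
    by apply/negP => /eqP xj; move: jl; rewrite -xj xl.
  by rewrite -signr_odd Hodd expr1 scaleN1r.
case: l lnil sub ls lu Hodd => [//|x l] _ sub ls lu Hodd.
apply: (@tr_anti x); rewrite sign_comm /= eqxx add0n.
have -> : count (predC1 x) l = size l.
  rewrite -[RHS]count_predT; apply: eq_in_count => y yl /=.
  by apply/negP => /eqP yx; move: lu; rewrite /= -yx yl.
by move: Hodd; rewrite /= -signr_odd => /negbNE ->; rewrite expr1 scaleN1r.
Qed.

Lemma telescope l : (\prod_(j <- l) h j) *: (prodm (map c (rev l)) *m prodm (map c l)) = 1%:M.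
Proof.
elim: l => [|x l IH]; first by rewrite big_nil scale1r /= mulmx1.
rewrite big_cons rev_cons map_rcons prodm_rcons /= -mulmxA [c x *m (c x *m _)]mulmxA csq.
by rewrite mul_scalar_mx -scalemxAr scalerA mulrAC hsq mul1r IH.
Qed.


Lemma sum_count (T : eqType) (P : pred T) (L : seq T) :
  \sum_(l <- L) ((P l)%:R : K) = (count P L)%:R.
Proof. by elim: L => [|x L IH]; rewrite ?big_nil ?big_cons ?IH ?natrD. Qed.

Lemma core_exists : exists T, T != 0 /\ forall i, T *m a i = c i *m T.
Proof.
have la0 : la != 0.
  apply/eqP => la0; move: vola; rewrite la0 scale0r.
  move/matrixP/(_ (Ordinal k_gt0) (Ordinal k_gt0)); rewrite !mxE eqxx /=.
  by move/eqP; rewrite eq_sym oner_eq0.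
have Ap : prodm (map a s) = la^-1 *: 1%:M.
  by rewrite -vola scalerA mulVf // scale1r.
have Cp : prodm (map c s) = la^-1 *: 1%:M.
  by rewrite -volc scalerA mulVf // scale1r.
have Cr : (\prod_(j <- s) h j) *: prodm (map c (rev s)) = la%:M.
  have := telescope s; rewrite scalemxAl Cp -scalemxAr mulmx1 => /(congr1 (fun M => la *: M)).
  by rewrite scalerA divff // scale1r => ->; rewrite scalemx1.
have sn : s != [::] by apply/negP => /eqP sn; move: (s_all (Ordinal n_gt0)); rewrite sn.
case: (pselect (exists X, Op s X != 0)) => [[X HX]|nex].
  exists (Op s X); split => // i; apply: (@Op_inter s X pred0) => //.
  by rewrite s_all.
have H0 : forall X, Op s X = 0.
  by move=> X; apply/eqP; apply/negP => /negP HX; apply: nex; exists X.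
have : Psi s 1%:M 1%:M = 0.
  by rewrite /Psi (@Phi_ext _ (fun _ => 0)) ?Phi0 // => X; rewrite H0.
rewrite Psi_expand.
have -> : \sum_(l <- subseqs s) (\prod_(j <- l) h j) * \tr (prodm (map c (rev l)) *m 1%:M)
      * \tr (1%:M *m prodm (map a l)) =
   \sum_(l <- subseqs s) (((l == [::]) + (l == s))%N%:R * (k%:R * k%:R)).
  rewrite big_seq_cond [RHS]big_seq_cond; apply: eq_bigr => l /andP[Hl _].
  have sub := mem_subseqs Hl.
  case: (eqVneq l [::]) => [->|ln].
    rewrite /= big_nil mul1r mulmx1 mxtrace1 eq_sym (negbTE sn) /=.
    by rewrite mul1r.
  case: (eqVneq l s) => [->|lns].
    rewrite mulmx1 mul1mx -(mxtraceZ (\prod_(j <- s) h j)) Cr Ap mxtraceZ !mxtrace_scalar /=.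
    by rewrite -[la *+ k]mulr_natr add0n mul1r mulrACA divff // mul1r.
  by rewrite mul1mx vanish // mulr0 /= mul0r.
rewrite -big_distrl /=.
under eq_bigr => l _ do rewrite natrD.
rewrite big_split /= (sum_count (pred1 [::])) (sum_count (pred1 s)).
rewrite count_subseqs_nil count_subseqs_self => /eqP.
rewrite -natrD -!natrM pnatr_eq0 !muln_eq0 /= orbb.
by rewrite eqn0Ngt k_gt0.
Qed.

End Core.




Lemma self_add0 (Z : zmodType) (x : Z) : x = x + x -> x = 0.
Proof. by move/eqP; rewrite -subr_eq0 opprD addrA subrr add0r oppr_eq0 => /eqP. Qed.

Section Main.
Variables (R : realType) (V : vectType R) (h : V -> V -> R) (A : algType R) (iota : V -> A).
Hypothesis hq : quad_form h.
Hypothesis Hcl : is_clifford_algebra h iota.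

Lemma h_lin1 a u v w : h (a *: u + v) w = a * h u w + h v w.
Proof. by case: hq. Qed.
Lemma h_sym u v : h u v = h v u.
Proof. by case: hq. Qed.
Lemma h_0l w : h 0 w = 0.
Proof.
by apply: self_add0; have := h_lin1 1 0 0 w; rewrite scale1r addr0 mul1r.
Qed.
Lemma h_addl u v w : h (u + v) w = h u w + h v w.
Proof. by have := h_lin1 1 u v w; rewrite scale1r mul1r. Qed.
Lemma h_scalel a u w : h (a *: u) w = a * h u w.
Proof. by rewrite -[a *: u]addr0 h_lin1 h_0l addr0. Qed.
Lemma h_addr u v w : h w (u + v) = h w u + h w v.
Proof. by rewrite h_sym h_addl !(h_sym w). Qed.
Lemma h_neg u v : h (- u) (- v) = h u v.
Proof.
rewrite -scaleN1r h_scalel h_sym -scaleN1r h_scalel h_sym.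
by rewrite mulrA mulrNN mul1r mul1r.
Qed.

Lemma iota_lin a u v : iota (a *: u + v) = a *: iota u + iota v.
Proof. by case: Hcl. Qed.
Lemma iota_sq v : iota v * iota v = (h v v)%:A.
Proof. by case: Hcl. Qed.
Lemma iota0 : iota 0 = 0.
Proof.
by apply: self_add0; have := iota_lin 1 0 0; rewrite scale1r addr0 scale1r.
Qed.
Lemma iotaD u v : iota (u + v) = iota u + iota v.
Proof. by have := iota_lin 1 u v; rewrite !scale1r. Qed.
Lemma iotaZ a u : iota (a *: u) = a *: iota u.
Proof. by rewrite -[a *: u]addr0 iota_lin iota0 addr0. Qed.
Lemma iotaN u : iota (- u) = - iota u.
Proof. by rewrite -scaleN1r iotaZ scaleN1r. Qed.
Lemma iotaB u v : iota (u - v) = iota u - iota v.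
Proof. by rewrite iotaD iotaN. Qed.

Lemma iota_anti u v : iota u * iota v + iota v * iota u = (h u v *+ 2)%:A.
Proof.
have E := iota_sq (u + v); rewrite iotaD mulrDl !mulrDr !iota_sq in E.
rewrite h_addl !h_addr (h_sym v u) in E.
have E2 : (h u u)%:A + (h v v)%:A + (iota u * iota v + iota v * iota u) =
          (h u u)%:A + (h v v)%:A + (h u v *+ 2)%:A.
  rewrite addrACA [(h v v)%:A + _]addrC E -!scalerDl; congr (_ *: _).
  by rewrite mulr2n; ring.
by apply: (addrI _ E2).
Qed.

Variable S : vectType R[i].

Lemma rep0 (g : A -> 'End(S)) : cl_rep g -> g 0 = 0.
Proof.
by case=> gD _ _ _; apply: self_add0; have := gD 0 0; rewrite addr0.
Qed.
Lemma repN (g : A -> 'End(S)) x : cl_rep g -> g (- x) = - g x.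
Proof.
move=> gr; have [gD _ _ _] := gr; apply/eqP; rewrite -subr_eq0 opprK -gD.
by rewrite addNr rep0.
Qed.
Lemma repA (g : A -> 'End(S)) (a : R) : cl_rep g -> g (a%:A) = (a%:C)%C *: \1%VF.
Proof. by case=> _ gZ _ g1; rewrite gZ g1. Qed.

Lemma weakly_faithful_of (g : A -> 'End(S)) : cl_rep g -> (0 < \dim {:S})%N ->
  weakly_faithful iota g.
Proof.
move=> gr dS u v Huv.
have [gD gZ gM g1] := gr.
have H0 : g (iota (u - v)) = 0 by rewrite iotaB gD repN // Huv subrr.
apply/eqP; rewrite -subr_eq0; apply/eqP; case: hq => _ _; apply => w.
have := congr1 g (iota_anti (u - v) w); rewrite gD !gM H0 comp_lfun0l comp_lfun0r addr0.
rewrite repA // => /esym/eqP; rewrite scaler_eq0.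
have -> : (\1%VF == 0 :> 'End(S)) = false.
  by apply/negbTE; apply: lfun1_neq0; rewrite -dimvf.
by rewrite orbF => /eqP [] /eqP; rewrite mulrn_eq0 /= => /eqP.
Qed.


Variable e : (\dim {:V}).-tuple V.
Hypothesis he : orthonormal_basis h e.

Lemma iota_gen (Q : A -> Prop) : Q 1 -> (forall x y, Q x -> Q y -> Q (x + y)) ->
  (forall (a : R) x, Q x -> Q (a *: x)) -> (forall x y, Q x -> Q y -> Q (x * y)) ->
  (forall i, Q (iota (tnth e i))) -> forall x, Q x.
Proof.
move=> Q1 QD QZ QM Qg; apply: (clifford_gen Hcl); split => // v.
have [eb _ _] := he.
rewrite (coord_basis eb (memvf v)).
elim/big_rec: _ => [|i y _ Hy]; first by rewrite iota0 -(scale0r 1); apply: QZ.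
rewrite iota_lin; apply: QD => //; apply: QZ; rewrite -tnth_nth; exact: Qg.
Qed.

Lemma intertw_all (r1 r2 : A -> 'End(S)) (G : 'End(S)) (F : A -> A) :
  cl_rep r1 -> cl_rep r2 -> ralg_morph F ->
  (forall i, (G \o r1 (iota (tnth e i)) = r2 (F (iota (tnth e i))) \o G)%VF) ->
  forall x, (G \o r1 x = r2 (F x) \o G)%VF.
Proof.
move=> [D1 Z1 M1 O1] [D2 Z2 M2 O2] [FD FZ FM F1] Hg.
apply: iota_gen => //.
- by rewrite O1 F1 O2 comp_lfun1l comp_lfun1r.
- by move=> x y Hx Hy; rewrite D1 FD D2 comp_lfunDr comp_lfunDl Hx Hy.
- by move=> a x Hx; rewrite Z1 FZ Z2 -comp_lfunZr -comp_lfunZl Hx.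
- by move=> x y Hx Hy; rewrite M1 FM M2 comp_lfunA Hx -comp_lfunA Hy comp_lfunA.
Qed.


Lemma gprod (g : A -> 'End(S)) l : cl_rep g ->
  g (\prod_(i <- l) iota (tnth e i)) =
  foldr (fun f r => f \o r)%VF \1%VF (map (fun i => g (iota (tnth e i))) l).
Proof.
case=> _ _ gM g1; elim: l => [|x l IH]; first by rewrite big_nil g1.
by rewrite big_cons gM IH.
Qed.

Lemma fold_neg (b : 'I_(\dim {:V}) -> 'End(S)) l :
  foldr (fun f r => f \o r)%VF \1%VF (map (fun i => - b i) l) =
  (-1) ^+ (size l) *: foldr (fun f r => f \o r)%VF \1%VF (map b l).
Proof.
elim: l => [|x l IH] /=; first by rewrite expr0 scale1r.
by rewrite IH comp_lfunNl -comp_lfunZr exprS mulN1r scaleNr.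
Qed.

Lemma size_ie m : size (index_enum 'I_m) = m.
Proof.
rewrite -[RHS](size_enum_ord m); apply: perm_size; apply: uniq_perm.
- exact: index_enum_uniq.
- exact: enum_uniq.
- by move=> x; rewrite mem_index_enum mem_enum.
Qed.

Lemma exists_T (gP gM : A -> 'End(S)) (lambda : R[i]) :
  odd (\dim {:V}) -> pauli_rep iota e lambda 1 gP -> pauli_rep iota e lambda (-1) gM ->
  exists T : 'End(S), T != 0 /\
    forall i, (T \o gP (iota (tnth e i)) = (- gM (iota (tnth e i))) \o T)%VF.
Proof.
move=> Hodd [rP [dS _] volP] [rM _ volM].
pose B := vbasis (fullv : {vspace S}).
have Bb : basis_of fullv B := vbasisP fullv.
pose M (f : 'End(S)) := passmx.mxof B B f.
have MC : forall f g, M (f \o g)%VF = M g *m M f.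
  by move=> f g; rewrite /M (@passmx.mxof_comp _ _ _ _ B B B Bb).
have M1 : M \1%VF = 1%:M by rewrite /M passmx.mxof1 // (basis_free Bb).
have M0 : M 0 = 0.
  apply: self_add0; have := passmx.mxof_linear B B 1 0 0.
  by rewrite scale1r addr0 scale1r.
have MZ : forall x f, M (x *: f) = x *: M f.
  by move=> x f; have := passmx.mxof_linear B B x f 0; rewrite !addr0 (M0 : passmx.mxof B B 0 = 0) addr0.
have MN : forall f, M (- f) = - M f.
  by move=> f; rewrite -scaleN1r MZ scaleN1r.
have [_ orth hpm] := he.
pose hC i := (h (tnth e i) (tnth e i))%:C%C.
have hsq : forall i, hC i * hC i = 1.
  move=> i; rewrite /hC -rmorphM; case: (hpm i) => ->.
    by rewrite mulr1 rmorph1.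
  by rewrite mulrNN mulr1 rmorph1.
have gsq : forall g : A -> 'End(S), cl_rep g -> forall i,
    (g (iota (tnth e i)) \o g (iota (tnth e i)) = hC i *: \1)%VF.
  by move=> g gr i; have [_ _ gMul _] := gr; rewrite -gMul iota_sq (repA _ gr).
have ganti : forall g : A -> 'End(S), cl_rep g -> forall i j, i != j ->
    (g (iota (tnth e i)) \o g (iota (tnth e j)) =
     - (g (iota (tnth e j)) \o g (iota (tnth e i))))%VF.
  move=> g gr i j nij; have [_ _ gMul _] := gr.
  have := iota_anti (tnth e i) (tnth e j); rewrite orth // mul0rn scale0r => /eqP.
  by rewrite addr_eq0 => /eqP E; rewrite -!gMul E (repN _ gr).
pose aP i := gP (iota (tnth e i)).
pose cM i := - gM (iota (tnth e i)).
have asq' : forall i, M (cM i) *m M (cM i) = (hC i)%:M.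
  by move=> i; rewrite -MC /cM comp_lfunNl comp_lfunNr opprK gsq // MZ M1 scalemx1.
have csq' : forall i, M (aP i) *m M (aP i) = (hC i)%:M.
  by move=> i; rewrite -MC /aP gsq // MZ M1 scalemx1.
have aanti' : forall i j, i != j -> M (cM i) *m M (cM j) = - (M (cM j) *m M (cM i)).
  move=> i j nij; rewrite -!MC /cM !comp_lfunNl !comp_lfunNr !opprK.
  by rewrite ganti // ?MN // eq_sym.
have canti' : forall i j, i != j -> M (aP i) *m M (aP j) = - (M (aP j) *m M (aP i)).
  move=> i j nij; rewrite -!MC /aP.
  by rewrite ganti // ?MN // eq_sym.
have Mfold : forall l, M (foldr (fun f r => f \o r)%VF \1%VF l) = prodm (map M (rev l)).
  elim=> [|f l IH] /=; first by rewrite M1.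
  by rewrite MC IH rev_cons map_rcons prodm_rcons.
pose s := rev (index_enum 'I_(\dim {:V})).
have s_uniq : uniq s by rewrite rev_uniq index_enum_uniq.
have s_all : forall i, i \in s by move=> i; rewrite mem_rev mem_index_enum.
have volc : lambda *: prodm (map (fun i => M (aP i)) s) = 1%:M.
  rewrite (map_comp M aP) map_rev -Mfold -MZ.
  have := volP; rewrite /clifford_volume (gprod _ rP) => ->.
  by rewrite scale1r M1.
have vola : lambda *: prodm (map (fun i => M (cM i)) s) = 1%:M.
  rewrite (map_comp M cM) map_rev -Mfold fold_neg -MZ scalerA mulrC -scalerA.
  have := volM; rewrite /clifford_volume (gprod _ rM) => ->.
  rewrite size_ie -signr_odd Hodd expr1 scalerA mulN1r opprK scale1r.
  exact: M1.
have [T' [T'0 HT']] := core_exists dS hsq asq' csq' aanti' canti' s_uniq s_all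
  (odd_gt0 Hodd) vola volc.
exists (passmx.hommx B B T'); split; first by rewrite passmx.hommx_eq0.
move=> i; apply: (can_inj (passmx.mxofK Bb Bb)).
by rewrite -/(M _) -/(M _) !MC /M passmx.hommxK // -HT'.
Qed.

End Main.



Unset Implicit Arguments.

Theorem proposition4p3 (R : realType) (V : vectType R) (h : V -> V -> R)
  (A : algType R) (iota : V -> A)
  (e : (\dim {: V}%VS).-tuple V) (lambda : R[i])
  (S : vectType R[i]) (gammaP gammaM : A -> 'End(S)) :
  quad_form h ->
  odd (\dim {: V}%VS) ->
  is_clifford_algebra h iota ->
  orthonormal_basis h e ->
  lambda ^+ 2 = ((sigma_pq R (sig_p h e) (sig_q h e))%:C)%C ->
  pauli_rep iota e lambda 1 gammaP ->
  pauli_rep iota e lambda (-1) gammaM ->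
  [/\ weakly_faithful iota gammaP, weakly_faithful iota gammaM
    & clrep_iso h iota gammaP gammaM].
Proof.
move=> hq Hodd Hcl he _ pP pM.
have [rP [dS irrP] _] := pP.
have [rM _ _] := pM.
split.
- exact: (weakly_faithful_of hq Hcl rP dS).
- exact: (weakly_faithful_of hq Hcl rM dS).
have [T [T0 HT]] := exists_T hq Hcl he Hodd pP pM.
have interF : forall F, ralg_morph F -> (forall v, F (iota v) = iota (- v)) ->
    forall x, (T \o gammaP x = gammaM (F x) \o T)%VF.
  move=> F Fr Fi; apply: (intertw_all Hcl he rP rM Fr) => i.
  by rewrite Fi (iotaN Hcl) (repN _ rM) HT.
have [F0 [[F0r F0i] _]] : exists! F : A -> A, ralg_morph F /\ (forall v, F (iota v) = iota (- v)).
  case: (Hcl) => Hlin Hsq Huniv; apply: Huniv.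
    by move=> a u v; rewrite opprD -scalerN Hlin.
  by move=> v; rewrite (iotaN Hcl) mulrNN.
have inv : forall x, (gammaP x @: lker T <= lker T)%VS.
  move=> x; apply/subvP => w /memv_imgP [u Hu ->]; rewrite memv_ker.
  have := congr1 (fun f : 'End(S) => f u) (interF F0 F0r F0i x); rewrite /= !comp_lfunE => ->.
  by move: Hu; rewrite memv_ker => /eqP ->; rewrite linear0.
have kerT : lker T == 0%VS.
  case: (irrP _ inv) => [->//|Hker].
  exfalso; move/eqP: T0; apply; apply/lfunP => u.
  by move: (memvf u); rewrite -Hker memv_ker => /eqP ->; rewrite zero_lfunE.
have Fconv : forall F, (forall v, F (iota v) = iota (((- \1)%VF : 'End(V)) v)) ->
    forall v, F (iota v) = iota (- v).
  by move=> F Fi v; rewrite Fi opp_lfunE id_lfunE.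
have isoN : Defs.isometry h h ((- \1)%VF : 'End(V)).
  by move=> u v; rewrite !opp_lfunE !id_lfunE (h_neg hq).
have NN : (((- \1) \o (- \1))%VF : 'End(V)) = \1%VF.
  by rewrite comp_lfunNl comp_lfunNr opprK comp_lfun1l.
exists (- \1)%VF, (- \1)%VF, T, (T^-1)%VF; split => //.
- split => // F Fr Fi x; rewrite (interF F Fr (Fconv F Fi) x) //.
- split => // F Fr Fi x; symmetry.
  apply: (intertw_all Hcl he rM rP Fr) => i.
  rewrite (Fconv F Fi) (iotaN Hcl) (repN _ rP).
  have E : (gammaM (iota (tnth e i)) \o T = - (T \o gammaP (iota (tnth e i))))%VF.
    by rewrite HT comp_lfunNl opprK.
  by rewrite -[LHS](lker0_compfK kerT) -[((T^-1 \o _) \o T)%VF]comp_lfunA E comp_lfunNr comp_lfunA (lker0_compVf kerT) comp_lfun1l.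
- by split; [apply: lker0_compVf | apply: lker0_compfV].
Qed.
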